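(* Let $n\ge 2$ and $m\ge 1$ be integers and let $X$ be an $n\times m$ Latin hypercube design. Then $$d_1(X)\le \left\lfloor \frac{(n+1)m}{3}\right\rfloor,\qquad d_2(X)\le \sqrt{\left\lfloor \frac{n(n+1)m}{6}\right\rfloor }.$$
   Context: An $n\times m$ Latin hypercube design (LHD) is an $n\times m$ matrix each of whose columns is a permutation of $\{1,\ldots,n\}$. For rows $x_i=(x_{i1},\dots,x_{im})$ and $x_j$ and a positive integer $q$, $d_q(x_i,x_j)=\{\sum_{k=1}^m|x_{ik}-x_{jk}|^q\}^{1/q}$, and $d_q(X)=\min\{d_q(x_i,x_j):1\le i<j\le n\}$. *)

(* Defs.v *)
From mathcomp Require Import all_boot all_order all_algebra.
From mathcomp Require Import all_classical all_reals.
From mathcomp Require Import exp.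
Set Implicit Arguments. Unset Strict Implicit. Unset Printing Implicit Defensive.
Import Order.TTheory GRing.Theory Num.Theory.
Local Open Scope ring_scope.

Definition is_LHD (n m : nat) (X : 'M[nat]_(n, m)) : Prop :=
  forall k : 'I_m,
    perm_eq [seq X i k | i <- enum 'I_n] (iota 1 n).

Definition dq_rows (R : realType) (q : nat) (n m : nat) (X : 'M[nat]_(n, m))
  (i j : 'I_n) : R :=
  powR (\sum_(k < m) (`|(X i k)%:R - (X j k)%:R| : R) ^+ q) (q%:R^-1).

(* The bigop seed is the
   maximum of d_q over all pairs of rows, which is >= every term, so for
   n >= 2 (nonempty index set) this is exactly the minimum. *)
Definition dq (R : realType) (q : nat) (n m : nat) (X : 'M[nat]_(n, m)) : R :=
  \big[Order.min/ \big[Order.max/0]_(i < n) \big[Order.max/0]_(j < n)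
        dq_rows R q X i j]_(p : 'I_n * 'I_n | (p.1 < p.2)%N)
     dq_rows R q X p.1 p.2.

(* Main.v *)
Require Import Defs.
From mathcomp Require Import all_boot all_order all_algebra.
From mathcomp Require Import all_classical all_reals.
From mathcomp Require Import exp.
From mathcomp Require Import zify.
Import Order.TTheory GRing.Theory Num.Theory.
Local Open Scope ring_scope.

Definition dist (a b : nat) : nat := (a - b) + (b - a).

Lemma distC a b : dist a b = dist b a.
Proof. by rewrite /dist addnC. Qed.

Lemma dist_real (R : realType) (a b : nat) :
  (`|a%:R - b%:R| : R) = (dist a b)%:R.
Proof.
rewrite /dist; case: (leqP a b) => h.
  rewrite (eqP (_ : a - b == 0)%N) ?subn_eq0 // add0n natrB //.
  by rewrite distrC ger0_norm // subr_ge0 ler_nat.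
rewrite (eqP (_ : b - a == 0)%N) ?subn_eq0 ?(ltnW h) // addn0 natrB ?(ltnW h) //.
by rewrite ger0_norm // subr_ge0 ler_nat ltnW.
Qed.

Lemma sum1 N : (2 * \sum_(1 <= i < N.+1) i = N * N.+1)%N.
Proof.
elim: N => [|N IH]; first by rewrite big_geq.
rewrite big_nat_recr //= mulnDr IH. lia.
Qed.

Lemma sum2 N : (6 * \sum_(1 <= i < N.+1) i ^ 2 = N * N.+1 * (2 * N + 1))%N.
Proof.
elim: N => [|N IH]; first by rewrite big_geq.
rewrite big_nat_recr //= mulnDr IH. lia.
Qed.

Lemma rev_sum e N :
  (\sum_(1 <= b < N.+1) dist N.+1 b ^ e = \sum_(1 <= i < N.+1) i ^ e)%N.
Proof.
rewrite big_nat_rev /=; apply: eq_big_nat => i /andP [h1 h2].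
have -> : dist N.+1 (1 + N.+1 - i.+1) = i by rewrite /dist; lia.
by [].
Qed.

Definition T e n := (\sum_(1 <= a < n.+1) \sum_(1 <= b < n.+1) dist a b ^ e)%N.

Lemma T_rec e n : (0 < e)%N -> (T e n.+1 = T e n + 2 * \sum_(1 <= i < n.+1) i ^ e)%N.
Proof.
move=> e0; rewrite /T [LHS]big_nat_recr //=.
rewrite (eq_big_nat _ _ (F2 := fun a => \sum_(1 <= b < n.+1) dist a b ^ e + dist a n.+1 ^ e)%N);
  last by move=> a _; rewrite big_nat_recr.
rewrite big_split /= (big_nat_recr n.+1 1 (fun b => (dist n.+1 b ^ e)%N)) //=.
have -> : dist n.+1 n.+1 = 0%N by rewrite /dist subnn.
have -> : (\sum_(1 <= i < n.+1) dist i n.+1 ^ e = \sum_(1 <= i < n.+1) dist n.+1 i ^ e)%N.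
  by apply: eq_bigr => i _; rewrite distC.
rewrite rev_sum.
rewrite exp0n //; lia.
Qed.

Lemma T1 n : (3 * T 1 n + n = n ^ 3)%N.
Proof.
elim: n => [|n IH]; first by rewrite /T big_geq.
rewrite T_rec //.
have -> : (\sum_(1 <= i < n.+1) i ^ 1 = \sum_(1 <= i < n.+1) i)%N by apply: eq_bigr => i _; rewrite expn1.
have := sum1 n. move=> h. nia.
Qed.

Lemma T2 n : (6 * T 2 n + n ^ 2 = n ^ 4)%N.
Proof.
elim: n => [|n IH]; first by rewrite /T big_geq.
rewrite T_rec //.
have := sum2 n. move=> h. nia.
Qed.

Lemma bigmin_le_seq (R : realType) (I : eqType) (s : seq I) (P : pred I)
  (F : I -> R) x p0 : p0 \in s -> P p0 ->
  \big[Order.min/x]_(p <- s | P p) F p <= F p0.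
Proof.
elim: s => // a s IH; rewrite in_cons big_cons => /orP [/eqP <- | h] Pp.
  by rewrite Pp ge_min lexx.
case: (P a); last exact: IH.
by rewrite ge_min IH ?orbT.
Qed.

Lemma sum_col (n : nat) (s : seq nat) (G : nat -> nat) (f : 'I_n -> nat) :
  perm_eq [seq f i | i <- enum 'I_n] s ->
  (\sum_(i < n) G (f i) = \sum_(a <- s) G a)%N.
Proof.
move=> h; rewrite -(perm_big _ h) big_map big_enum /=.
by apply: eq_bigl => i; rewrite inE.
Qed.

Lemma sumLHD e {n m} (X : 'M[nat]_(n, m)) : is_LHD X ->
  (\sum_(i < n) \sum_(j < n) \sum_(k < m) dist (X i k) (X j k) ^ e = m * T e n)%N.
Proof.
move=> H.
under eq_bigr do rewrite exchange_big.
rewrite exchange_big /=.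
rewrite (eq_bigr (fun _ => T e n)) ?sum_nat_const ?card_ord //.
move=> k _.
rewrite (@sum_col _ _ (fun a => \sum_(j < n) dist a (X j k) ^ e)%N _ (H k)).
rewrite /T /index_iota subn1 /=.
apply: eq_bigr => a _.
by rewrite (@sum_col _ _ (fun b => dist a b ^ e)%N _ (H k)).
Qed.

Definition D e n m (X : 'M[nat]_(n, m)) (i j : 'I_n) :=
  (\sum_(k < m) dist (X i k) (X j k) ^ e)%N.
Arguments D e {n m} X i j.

Lemma avg e n m (X : 'M[nat]_(n, m)) c : is_LHD X ->
  (forall i j : 'I_n, i != j -> c <= D e X i j)%N ->
  (n * n * c <= m * T e n + c * n)%N.
Proof.
move=> HX H.
have h1 : (\sum_(i < n) \sum_(j < n) c <= \sum_(i < n) \sum_(j < n) (D e X i j + c * (i == j)))%N.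
  apply: leq_sum => i _; apply: leq_sum => j _.
  case: (eqVneq i j) => [_|/H h]; first by rewrite muln1 leq_addl.
  exact: leq_trans h (leq_addr _ _).
move: h1; rewrite (eq_bigr (fun _ => n * c)%N); last first.
  by move=> i _; rewrite sum_nat_const card_ord.
rewrite sum_nat_const card_ord mulnA.
under eq_bigr do rewrite big_split /=.
rewrite big_split /= -(@sumLHD e _ _ X HX) /D.
have -> : (\sum_(i < n) \sum_(j < n) c * (i == j) = c * n)%N.
  rewrite (eq_bigr (fun _ => c)) ?sum_nat_const ?card_ord 1?mulnC //.
  move=> i _; rewrite (bigD1 i) //= eqxx muln1 big1 ?addn0 //.
  by move=> j /negbTE; rewrite eq_sym => ->; rewrite muln0.
by [].
Qed.
Lemma arith1 n m T c : (2 <= n)%N -> (3 * T + n = n ^ 3)%N ->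
  (n * n * c <= m * T + c * n)%N -> ((n + 1) * m < 3 * c)%N -> False.
Proof.
move=> hn hT h1 h2.
have h3 : (3 * c * (n * (n - 1)) <= (n + 1) * m * (n * (n - 1)))%N by nia.
rewrite leq_pmul2r in h3; first lia.
nia.
Qed.
Lemma arith2 n m T c : (2 <= n)%N -> (6 * T + n ^ 2 = n ^ 4)%N ->
  (n * n * c <= m * T + c * n)%N -> (n * (n + 1) * m < 6 * c)%N -> False.
Proof.
move=> hn hT h1 h2.
have h3 : (6 * c * (n * (n - 1)) <= n * (n + 1) * m * (n * (n - 1)))%N by nia.
rewrite leq_pmul2r in h3; first lia.
nia.
Qed.

Lemma ex_small e n m (X : 'M[nat]_(n, m)) B : is_LHD X ->
  ~ (n * n * B.+1 <= m * T e n + B.+1 * n)%N ->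
  exists i j : 'I_n, i != j /\ (D e X i j <= B)%N.
Proof.
move=> HX H.
case: (boolP [exists i, exists j, (i != j) && (D e X i j <= B)%N]).
  by move=> /existsP [i /existsP [j /andP [h1 h2]]]; exists i, j.
move=> /existsPn hn; exfalso; apply: H; apply: avg => // i j hij.
by have := hn i => /existsPn /(_ j); rewrite hij /= -ltnNge.
Qed.

Lemma dq_rowsC (R : realType) q n m (X : 'M[nat]_(n, m)) i j :
  dq_rows R q X i j = dq_rows R q X j i.
Proof. by rewrite /dq_rows; congr powR; apply: eq_bigr => k _; rewrite distrC. Qed.

Lemma dq_le (R : realType) q n m (X : 'M[nat]_(n, m)) (i j : 'I_n) : i != j ->
  dq R q X <= dq_rows R q X i j.
Proof.
move=> hij; rewrite /dq.
case: (ltngtP i j) => h.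
- by apply: (@bigmin_le_seq _ _ _ _ (fun p => dq_rows R q X p.1 p.2) _ (i, j)) => //; exact: mem_index_enum.
- rewrite dq_rowsC.
  by apply: (@bigmin_le_seq _ _ _ _ (fun p => dq_rows R q X p.1 p.2) _ (j, i)) => //; exact: mem_index_enum.
- by move: hij; rewrite (val_inj h) eqxx.
Qed.

Lemma dq_rows_sum (R : realType) q n m (X : 'M[nat]_(n, m)) i j :
  (\sum_(k < m) (`|(X i k)%:R - (X j k)%:R| : R) ^+ q) = (D q X i j)%:R.
Proof.
rewrite /D natr_sum; apply: eq_bigr => k _.
by rewrite dist_real natrX.
Qed.

Theorem lemma1 (R : realType) (n m : nat) (X : 'M[nat]_(n, m)) :
  (2 <= n)%N -> (1 <= m)%N -> is_LHD X ->
  dq R 1 X <= ((((n + 1) * m) %/ 3)%N)%:R /\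
  dq R 2 X <= Num.sqrt ((((n * (n + 1) * m) %/ 6)%N)%:R).
Proof.
move=> hn hm HX; split.
- have [i [j [hij hD]]] := @ex_small 1 n m X (((n + 1) * m) %/ 3) HX
    (fun h => @arith1 n m _ _ hn (T1 n) h (ltac:(lia))).
  apply: (le_trans (@dq_le R 1 n m X i j hij)).
  rewrite /dq_rows dq_rows_sum invr1 powRr1 ?ler0n // ler_nat //.
- have [i [j [hij hD]]] := @ex_small 2 n m X ((n * (n + 1) * m) %/ 6) HX
    (fun h => @arith2 n m _ _ hn (T2 n) h (ltac:(lia))).
  apply: (le_trans (@dq_le R 2 n m X i j hij)).
  rewrite /dq_rows dq_rows_sum powR12_sqrt ?ler0n //.
  by rewrite ler_sqrt ?ler0n // ler_nat.
Qed.
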